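(* Let $(\mathfrak{g},[\cdot,\cdot]_{\mathfrak{g}},\phi_{\mathfrak{g}})$ be a finite-dimensional weakly involutive Hom-Lie algebra and $(V,\beta,\rho)$ a weakly involutive representation ($V$ finite-dimensional) satisfying $\rho(\phi_{\mathfrak g}(x))\beta^2=\rho(\phi_{\mathfrak g}(x))$ for all $x\in\mathfrak g$. Let $T:V\to\mathfrak g$ be an $\mathcal O$-operator associated to $(V,\beta,\rho)$. Then there is a coboundary Hom-Lie bialgebra structure on $\mathfrak g\ltimes_{\rho^\circ}V^*$ induced by $r=\overline T-\sigma(\overline T)$, i.e. with cobracket $\Delta(u)=(\mathrm{ad}_u\otimes\phi_d+\phi_d\otimes\mathrm{ad}_u)r$, where $\phi_d=\phi_{\mathfrak g}\oplus\beta^*$.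
   Context: A Hom-Lie algebra $(\mathfrak{h},[\cdot,\cdot]_{\mathfrak{h}},\phi_{\mathfrak{h}})$: skew-symmetric bilinear bracket and linear map with $\phi_{\mathfrak h}[x,y]=[\phi_{\mathfrak h}x,\phi_{\mathfrak h}y]$ and $[\phi_{\mathfrak h}(x),[y,z]]+[\phi_{\mathfrak h}(y),[z,x]]+[\phi_{\mathfrak h}(z),[x,y]]=0$; weakly involutive if $[\phi_{\mathfrak h}^2(x),y]=[x,y]$ for all $x,y$. $\mathrm{ad}_zy=[z,y]$. A representation $(V,\beta,\rho)$ of $\mathfrak g$: $\beta\in\mathfrak{gl}(V)$, $\rho:\mathfrak g\to\mathfrak{gl}(V)$ with $\rho(\phi_{\mathfrak g}(x))\beta=\beta\rho(x)$ and $\rho([x,y]_{\mathfrak g})\beta=\rho(\phi_{\mathfrak g}(x))\rho(y)-\rho(\phi_{\mathfrak g}(y))\rho(x)$; weakly involutive if $\rho(\phi_{\mathfrak g}^2(x))=\rho(x)$. $\rho^\circ:\mathfrak g\to\mathfrak{gl}(V^* )$, $\langle\rho^\circ(x)\xi,v\rangle=-\langle\xi,\rho(\phi_{\mathfrak g}(x))v\rangle$. $\mathfrak g\ltimes_{\rho^\circ}V^*$ is $\mathfrak g\oplus V^*$ with bracket $[(x,\xi),(y,\eta)]=([x,y]_{\mathfrak g},\rho^\circ(x)\eta-\rho^\circ(y)\xi)$ and twisting map $\phi_{\mathfrak g}\oplus\beta^*$. An $\mathcal O$-operator associated to $(V,\beta,\rho)$ is a linear $T:V\to\mathfrak g$ with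 $T\beta=\phi_{\mathfrak g}T$ and $[T(u),T(v)]_{\mathfrak g}=T(\rho(T(u))v-\rho(T(v))u)$. With a basis $\{v_i\}$ of $V$ and dual basis $\{v^i\}$, $\overline T=\sum_iv^i\otimes T(v_i)$; $\sigma$ is the flip. A Hom-Lie bialgebra $(\mathfrak h,\Delta)$ (finite-dimensional): a weakly involutive Hom-Lie algebra $\mathfrak h$ with $\Delta:\mathfrak h\to\mathfrak h\otimes\mathfrak h$ such that $\mathfrak h^*$ with bracket $\langle[a,b],x\rangle=\langle\Delta(x),a\otimes b\rangle$ and map $\phi_{\mathfrak h}^*$ is a weakly involutive Hom-Lie algebra and $\Delta[x,y]=\mathrm{ad}_{\phi_{\mathfrak h}(x)}\Delta(y)-\mathrm{ad}_{\phi_{\mathfrak h}(y)}\Delta(x)$, where $\mathrm{ad}_zt=(\mathrm{ad}_z\otimes\phi_{\mathfrak h}+\phi_{\mathfrak h}\otimes\mathrm{ad}_z)t$ for $t\in\mathfrak h\otimes\mathfrak h$. It is coboundary if $\Delta(x)=\mathrm{ad}_xr$ for some $r$ with $(\phi_{\mathfrak h}\otimes\mathrm{Id})r=(\mathrm{Id}\otimes\phi_{\mathfrak h})r$. *)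

(* Defs.v *)
(* Finite-dimensional spaces are modelled in coordinates:
   a space of dimension n is 'rV[K]_n, the tensor square is 'M[K]_(n,n)
   (entry t i j = coefficient of e_i (x) e_j), linear maps are functions
   with an explicit linearity hypothesis, the dual of 'rV_m is 'rV_m with the
   dual basis given by the standard basis (pairing = sum_i xi_i v_i). *)
From HB Require Import structures.
From mathcomp Require Import all_boot all_order all_algebra.
Set Implicit Arguments. Unset Strict Implicit. Unset Printing Implicit Defensive.
Import GRing.Theory.
Local Open Scope ring_scope.

Section HomLieDefs.
Variable K : fieldType.

Definition lin_map (U W : lmodType K) (f : U -> W) :=
  forall (a : K) (x y : U), f (a *: x + y) = a *: f x + f y.

Definition bilin n (br : 'rV[K]_n -> 'rV[K]_n -> 'rV[K]_n) :=
  (forall z, lin_map (fun x => br x z)) /\ (forall z, lin_map (br z)).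

Definition HomLie n (br : 'rV[K]_n -> 'rV[K]_n -> 'rV[K]_n)
    (phi : 'rV[K]_n -> 'rV[K]_n) :=
  [/\ bilin br, lin_map phi,
      forall x y, br x y = - br y x,
      forall x y, phi (br x y) = br (phi x) (phi y) &
      forall x y z, br (phi x) (br y z) + br (phi y) (br z x)
                    + br (phi z) (br x y) = 0].

Definition weakly_inv n (br : 'rV[K]_n -> 'rV[K]_n -> 'rV[K]_n)
    (phi : 'rV[K]_n -> 'rV[K]_n) :=
  forall x y, br (phi (phi x)) y = br x y.

Definition bvec n (i : 'I_n) : 'rV[K]_n := delta_mx 0 i.
Definition pairing n (xi v : 'rV[K]_n) : K := \sum_i xi 0 i * v 0 i.
Definition dual_map n m (f : 'rV[K]_n -> 'rV[K]_m) (xi : 'rV[K]_m) : 'rV[K]_n :=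
  \row_k pairing xi (f (bvec k)).

Definition tens n (x y : 'rV[K]_n) : 'M[K]_(n, n) := x^T *m y.
Definition flip n (t : 'M[K]_(n, n)) : 'M[K]_(n, n) := t^T.
Definition tmap n (f g : 'rV[K]_n -> 'rV[K]_n) (t : 'M[K]_(n, n)) : 'M[K]_(n, n) :=
  \sum_i \sum_j t i j *: tens (f (bvec i)) (g (bvec j)).
Definition adT n (br : 'rV[K]_n -> 'rV[K]_n -> 'rV[K]_n)
    (phi : 'rV[K]_n -> 'rV[K]_n) (z : 'rV[K]_n) (t : 'M[K]_(n, n)) :=
  tmap (br z) phi t + tmap phi (br z) t.

(* bracket on h^* induced by Delta: <[a,b], x> = <Delta x, a (x) b> *)
Definition dual_br n (D : 'rV[K]_n -> 'M[K]_(n, n)) (a b : 'rV[K]_n) : 'rV[K]_n :=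
  \row_k \sum_i \sum_j D (bvec k) i j * a 0 i * b 0 j.

Definition HomLieBialg n (br : 'rV[K]_n -> 'rV[K]_n -> 'rV[K]_n)
    (phi : 'rV[K]_n -> 'rV[K]_n) (D : 'rV[K]_n -> 'M[K]_(n, n)) :=
  [/\ HomLie br phi /\ weakly_inv br phi, lin_map D,
      HomLie (dual_br D) (dual_map phi), weakly_inv (dual_br D) (dual_map phi) &
      forall x y, D (br x y) = adT br phi (phi x) (D y) - adT br phi (phi y) (D x)].

Definition coboundary_HLB n (br : 'rV[K]_n -> 'rV[K]_n -> 'rV[K]_n)
    (phi : 'rV[K]_n -> 'rV[K]_n) (D : 'rV[K]_n -> 'M[K]_(n, n)) (r : 'M[K]_(n, n)) :=
  [/\ HomLieBialg br phi D, forall x, D x = adT br phi x r &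
      tmap phi id r = tmap id phi r].

Definition HomLieRep n m (br : 'rV[K]_n -> 'rV[K]_n -> 'rV[K]_n)
    (phi : 'rV[K]_n -> 'rV[K]_n) (beta : 'rV[K]_m -> 'rV[K]_m)
    (rho : 'rV[K]_n -> 'rV[K]_m -> 'rV[K]_m) :=
  [/\ lin_map beta, forall x, lin_map (rho x),
      forall (a : K) x y v, rho (a *: x + y) v = a *: rho x v + rho y v,
      forall x v, rho (phi x) (beta v) = beta (rho x v) &
      forall x y v, rho (br x y) (beta v)
                    = rho (phi x) (rho y v) - rho (phi y) (rho x v)].

Definition weakly_inv_rep n m (phi : 'rV[K]_n -> 'rV[K]_n)
    (rho : 'rV[K]_n -> 'rV[K]_m -> 'rV[K]_m) :=
  forall x v, rho (phi (phi x)) v = rho x v.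

Definition O_operator n m (br : 'rV[K]_n -> 'rV[K]_n -> 'rV[K]_n)
    (phi : 'rV[K]_n -> 'rV[K]_n) (beta : 'rV[K]_m -> 'rV[K]_m)
    (rho : 'rV[K]_n -> 'rV[K]_m -> 'rV[K]_m) (T : 'rV[K]_m -> 'rV[K]_n) :=
  [/\ lin_map T, forall v, T (beta v) = phi (T v) &
      forall u v, br (T u) (T v) = T (rho (T u) v - rho (T v) u)].

Definition rho_circ n m (phi : 'rV[K]_n -> 'rV[K]_n)
    (rho : 'rV[K]_n -> 'rV[K]_m -> 'rV[K]_m) (x : 'rV[K]_n) (xi : 'rV[K]_m)
  : 'rV[K]_m := \row_k - pairing xi (rho (phi x) (bvec k)).

Definition sd_br n m (br : 'rV[K]_n -> 'rV[K]_n -> 'rV[K]_n)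
    (phi : 'rV[K]_n -> 'rV[K]_n) (rho : 'rV[K]_n -> 'rV[K]_m -> 'rV[K]_m)
    (u w : 'rV[K]_(n + m)) : 'rV[K]_(n + m) :=
  row_mx (br (lsubmx u) (lsubmx w))
         (rho_circ phi rho (lsubmx u) (rsubmx w)
          - rho_circ phi rho (lsubmx w) (rsubmx u)).

Definition sd_phi n m (phi : 'rV[K]_n -> 'rV[K]_n) (beta : 'rV[K]_m -> 'rV[K]_m)
    (u : 'rV[K]_(n + m)) : 'rV[K]_(n + m) :=
  row_mx (phi (lsubmx u)) (dual_map beta (rsubmx u)).

Definition Tbar n m (T : 'rV[K]_m -> 'rV[K]_n) : 'M[K]_(n + m, n + m) :=
  \sum_i tens (row_mx (0 : 'rV[K]_n) (bvec i)) (row_mx (T (bvec i)) (0 : 'rV[K]_m)).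

End HomLieDefs.

(* Main.v *)
Require Import Defs.
From HB Require Import structures.
From mathcomp Require Import all_boot all_order all_algebra.
From mathcomp Require Import ring.
Set Implicit Arguments. Unset Strict Implicit. Unset Printing Implicit Defensive.
Import GRing.Theory.
Local Open Scope ring_scope.

Section Gen.
Variable K : fieldType.
Implicit Types (p q : nat).

Lemma pairingC p (a x : 'rV[K]_p) : pairing a x = pairing x a.
Proof. by apply: eq_bigr => i _; rewrite mulrC. Qed.

Lemma pairingDl p (a b x : 'rV[K]_p) : pairing (a + b) x = pairing a x + pairing b x.
Proof. by rewrite /pairing -big_split; apply: eq_bigr => i _; rewrite mxE mulrDl. Qed.
Lemma pairingZl p c (a x : 'rV[K]_p) : pairing (c *: a) x = c * pairing a x.
Proof. by rewrite /pairing mulr_sumr; apply: eq_bigr => i _; rewrite mxE mulrA. Qed.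
Lemma pairingNl p (a x : 'rV[K]_p) : pairing (- a) x = - pairing a x.
Proof. by rewrite -scaleN1r pairingZl mulN1r. Qed.
Lemma pairingBl p (a b x : 'rV[K]_p) : pairing (a - b) x = pairing a x - pairing b x.
Proof. by rewrite pairingDl pairingNl. Qed.
Lemma pairing0l p (x : 'rV[K]_p) : pairing 0 x = 0.
Proof. by rewrite /pairing big1 // => i _; rewrite mxE mul0r. Qed.
Lemma pairingDr p (a b x : 'rV[K]_p) : pairing x (a + b) = pairing x a + pairing x b.
Proof. by rewrite !(pairingC x) pairingDl. Qed.
Lemma pairingZr p c (a x : 'rV[K]_p) : pairing x (c *: a) = c * pairing x a.
Proof. by rewrite !(pairingC x) pairingZl. Qed.
Lemma pairingNr p (a x : 'rV[K]_p) : pairing x (- a) = - pairing x a.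
Proof. by rewrite !(pairingC x) pairingNl. Qed.
Lemma pairingBr p (a b x : 'rV[K]_p) : pairing x (a - b) = pairing x a - pairing x b.
Proof. by rewrite !(pairingC x) pairingBl. Qed.
Lemma pairing0r p (x : 'rV[K]_p) : pairing x 0 = 0.
Proof. by rewrite pairingC pairing0l. Qed.
Lemma pairing_sumr p I (s : seq I) (P : pred I) (F : I -> 'rV[K]_p) x :
  pairing x (\sum_(i <- s | P i) F i) = \sum_(i <- s | P i) pairing x (F i).
Proof.
elim/big_rec2: _ => [|i y1 y2 _ <-]; first exact: pairing0r.
by rewrite pairingDr.
Qed.
Lemma pairing_suml p I (s : seq I) (P : pred I) (F : I -> 'rV[K]_p) x :
  pairing (\sum_(i <- s | P i) F i) x = \sum_(i <- s | P i) pairing (F i) x.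
Proof. by rewrite pairingC pairing_sumr; apply: eq_bigr => i _; rewrite pairingC. Qed.

Lemma bvecE p (k i : 'I_p) : bvec K k 0 i = (k == i)%:R.
Proof. by rewrite /bvec mxE eqxx /= eq_sym. Qed.

Lemma pairing_bvec p (a : 'rV[K]_p) k : pairing a (bvec K k) = a 0 k.
Proof.
rewrite /pairing (bigD1 k) //= bvecE eqxx mulr1 big1 ?addr0 // => i ik.
by rewrite bvecE eq_sym (negbTE ik) mulr0.
Qed.

Lemma row_ext p (a b : 'rV[K]_p) : (forall k, pairing a (bvec K k) = pairing b (bvec K k)) -> a = b.
Proof. by move=> H; apply/rowP => k; rewrite -!pairing_bvec H. Qed.

Lemma row_ext_all p (a b : 'rV[K]_p) : (forall x, pairing a x = pairing b x) -> a = b.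
Proof. by move=> H; apply: row_ext => k. Qed.

Lemma row_decomp p (x : 'rV[K]_p) : x = \sum_k x 0 k *: bvec K k.
Proof. exact: row_sum_delta. Qed.

Section Lin.
Variables (U W : lmodType K) (f : U -> W) (hf : lin_map f).
Lemma lin0 : f 0 = 0.
Proof. have H := hf 1 0 0; rewrite !scale1r addr0 in H. by rewrite -[LHS](addrK (f 0)) -H subrr. Qed.
Lemma linD x y : f (x + y) = f x + f y.
Proof. by have := hf 1 x y; rewrite !scale1r. Qed.
Lemma linZ c x : f (c *: x) = c *: f x.
Proof. by have := hf c x 0; rewrite !addr0 lin0 addr0. Qed.
Lemma linN x : f (- x) = - f x.
Proof. by rewrite -scaleN1r linZ scaleN1r. Qed.
Lemma linB x y : f (x - y) = f x - f y.
Proof. by rewrite linD linN. Qed.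
Lemma lin_sum I (s : seq I) (P : pred I) (F : I -> U) :
  f (\sum_(i <- s | P i) F i) = \sum_(i <- s | P i) f (F i).
Proof. elim/big_rec2: _ => [|i y1 y2 _ <-]; [exact: lin0|exact: linD]. Qed.
End Lin.

Lemma lin_decomp p (W : lmodType K) (f : 'rV[K]_p -> W) (hf : lin_map f) x :
  f x = \sum_k x 0 k *: f (bvec K k).
Proof.
rewrite {1}(row_decomp x) (lin_sum hf); apply: eq_bigr => k _; exact: linZ.
Qed.

Lemma dual_pair p q (f : 'rV[K]_p -> 'rV[K]_q) (hf : lin_map f) a x :
  pairing (dual_map f a) x = pairing a (f x).
Proof.
rewrite (lin_decomp hf x) pairing_sumr.
under [RHS]eq_bigr do rewrite pairingZr.
rewrite /pairing; apply: eq_bigr => k _; rewrite mxE mulrC /pairing.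
by congr (_ * _); apply: eq_bigr => i _.
Qed.

End Gen.

Section Eval.
Variable K : fieldType.
Implicit Types (p q : nat).

Definition evalT p (t : 'M[K]_(p,p)) (a b : 'rV[K]_p) : K :=
  \sum_i \sum_j t i j * a 0 i * b 0 j.

Lemma evalTD p (s t : 'M[K]_(p,p)) a b : evalT (s + t) a b = evalT s a b + evalT t a b.
Proof.
rewrite /evalT -big_split; apply: eq_bigr => i _; rewrite -big_split.
by apply: eq_bigr => j _; rewrite mxE !mulrDl.
Qed.
Lemma evalTZ p c (t : 'M[K]_(p,p)) a b : evalT (c *: t) a b = c * evalT t a b.
Proof.
rewrite /evalT mulr_sumr; apply: eq_bigr => i _; rewrite mulr_sumr.
by apply: eq_bigr => j _; rewrite mxE !mulrA.
Qed.
Lemma evalTN p (t : 'M[K]_(p,p)) a b : evalT (- t) a b = - evalT t a b.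
Proof. by rewrite -scaleN1r evalTZ mulN1r. Qed.
Lemma evalTB p (s t : 'M[K]_(p,p)) a b : evalT (s - t) a b = evalT s a b - evalT t a b.
Proof. by rewrite evalTD evalTN. Qed.
Lemma evalT0 p (a b : 'rV[K]_p) : evalT 0 a b = 0.
Proof. by rewrite /evalT big1 // => i _; rewrite big1 // => j _; rewrite mxE !mul0r. Qed.
Lemma evalT_sum p I (s : seq I) (P : pred I) (F : I -> 'M[K]_(p,p)) a b :
  evalT (\sum_(i <- s | P i) F i) a b = \sum_(i <- s | P i) evalT (F i) a b.
Proof.
elim/big_rec2: _ => [|i y1 y2 _ <-]; [exact: evalT0|exact: evalTD].
Qed.

Lemma tensE p (x y : 'rV[K]_p) i j : tens x y i j = x 0 i * y 0 j.
Proof. by rewrite /tens mxE big_ord1 mxE. Qed.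

Lemma evalT_tens p (x y a b : 'rV[K]_p) :
  evalT (tens x y) a b = pairing a x * pairing b y.
Proof.
rewrite /evalT /pairing mulr_suml; apply: eq_bigr => i _.
rewrite mulr_sumr; apply: eq_bigr => j _.
by rewrite tensE; ring.
Qed.

Lemma evalT_tmap p (f g : 'rV[K]_p -> 'rV[K]_p) t a b :
  evalT (tmap f g t) a b = evalT t (dual_map f a) (dual_map g b).
Proof.
have -> : tmap f g t = \sum_i \sum_j t i j *: tens (f (bvec K i)) (g (bvec K j)) by [].
rewrite evalT_sum [RHS]/evalT; apply: eq_bigr => i _.
rewrite evalT_sum; apply: eq_bigr => j _.
by rewrite evalTZ evalT_tens !mxE mulrA.
Qed.

Lemma evalT_flip p (t : 'M[K]_(p,p)) a b : evalT (flip t) a b = evalT t b a.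
Proof.
rewrite /evalT exchange_big /=; apply: eq_bigr => i _; apply: eq_bigr => j _.
by rewrite mxE -mulrA [_ * b 0 _]mulrC mulrA.
Qed.

Lemma evalT_bvec p (t : 'M[K]_(p,p)) i j : evalT t (bvec K i) (bvec K j) = t i j.
Proof.
rewrite /evalT (bigD1 i) //= [X in _ + X]big1 ?addr0; last first.
  move=> k ki; have ik : (i == k) = false by apply/negbTE; rewrite eq_sym.
  by rewrite big1 // => l _; rewrite !bvecE ik mulr0 mul0r.
rewrite (bigD1 j) //= [X in _ + X]big1 ?addr0; last first.
  move=> k kj; have jk : (j == k) = false by apply/negbTE; rewrite eq_sym.
  by rewrite !bvecE jk mulr0.
by rewrite !bvecE !eqxx !mulr1.
Qed.

Lemma mx_ext p (s t : 'M[K]_(p,p)) : (forall a b, evalT s a b = evalT t a b) -> s = t.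
Proof. by move=> H; apply/matrixP => i j; rewrite -!evalT_bvec H. Qed.

Lemma pairing_split p q (a x : 'rV[K]_(p + q)) :
  pairing a x = pairing (lsubmx a) (lsubmx x) + pairing (rsubmx a) (rsubmx x).
Proof. by rewrite /pairing big_split_ord; congr (_ + _); apply: eq_bigr => i _; rewrite !mxE. Qed.

Lemma pairing_row_mx p q (a y : 'rV[K]_p) (b z : 'rV[K]_q) :
  pairing (row_mx a b) (row_mx y z) = pairing a y + pairing b z.
Proof. by rewrite pairing_split !row_mxKl !row_mxKr. Qed.

Lemma bvec_lshift p q (k : 'I_p) : bvec K (lshift q k) = row_mx (bvec K k) 0.
Proof. exact: delta_mx_lshift. Qed.
Lemma bvec_rshift p q (k : 'I_q) : bvec K (rshift p k) = row_mx 0 (bvec K k).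
Proof. exact: delta_mx_rshift. Qed.

Lemma lsub_dual p q r (f : 'rV[K]_(p + q) -> 'rV[K]_r) a :
  lsubmx (dual_map f a) = dual_map (fun y => f (row_mx y 0)) a.
Proof. by apply/rowP => k; rewrite !mxE bvec_lshift. Qed.
Lemma rsub_dual p q r (f : 'rV[K]_(p + q) -> 'rV[K]_r) a :
  rsubmx (dual_map f a) = dual_map (fun y => f (row_mx 0 y)) a.
Proof. by apply/rowP => k; rewrite !mxE bvec_rshift. Qed.

Lemma evalT_Tbar p q (T : 'rV[K]_q -> 'rV[K]_p) (hT : lin_map T) a b :
  evalT (Tbar T) a b = pairing (lsubmx b) (T (rsubmx a)).
Proof.
have -> : Tbar T = \sum_i tens (row_mx (0 : 'rV[K]_p) (bvec K i)) (row_mx (T (bvec K i)) (0 : 'rV[K]_q)) by [].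
rewrite evalT_sum (lin_decomp hT) pairing_sumr; apply: eq_bigr => i _.
rewrite evalT_tens !pairing_split !row_mxKl !row_mxKr !pairing0r add0r addr0.
by rewrite pairing_bvec pairingZr.
Qed.

Lemma lin_dual p q (f : 'rV[K]_p -> 'rV[K]_q) : lin_map (dual_map f).
Proof. by move=> c a b; apply/rowP => k; rewrite !mxE pairingDl pairingZl. Qed.

End Eval.

Ltac vec := apply/rowP => ?; rewrite !mxE; ring.



Section LieFacts.
Variables (K : fieldType) (n : nat).
Variables (br : 'rV[K]_n -> 'rV[K]_n -> 'rV[K]_n) (phi : 'rV[K]_n -> 'rV[K]_n).
Hypothesis HL : HomLie br phi.

Lemma brl z : lin_map (fun x => br x z). Proof. by case: HL => [[]]. Qed.
Lemma brr z : lin_map (br z). Proof. by case: HL => [[]]. Qed.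
Lemma phil : lin_map phi. Proof. by case: HL. Qed.
Lemma br_skew x y : br x y = - br y x. Proof. by case: HL. Qed.
Lemma phi_br x y : phi (br x y) = br (phi x) (phi y). Proof. by case: HL. Qed.
Lemma br_jac x y z : br (phi x) (br y z) + br (phi y) (br z x) + br (phi z) (br x y) = 0.
Proof. by case: HL. Qed.

Lemma brDl x y z : br (x + y) z = br x z + br y z. Proof. exact: (linD (brl z)). Qed.
Lemma brZl c x z : br (c *: x) z = c *: br x z. Proof. exact: (linZ (brl z)). Qed.
Lemma brNl x z : br (- x) z = - br x z. Proof. exact: (linN (brl z)). Qed.
Lemma brBl x y z : br (x - y) z = br x z - br y z. Proof. exact: (linB (brl z)). Qed.
Lemma br0l z : br 0 z = 0. Proof. exact: (lin0 (brl z)). Qed.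
Lemma brDr x y z : br z (x + y) = br z x + br z y. Proof. exact: (linD (brr z)). Qed.
Lemma brZr c x z : br z (c *: x) = c *: br z x. Proof. exact: (linZ (brr z)). Qed.
Lemma brNr x z : br z (- x) = - br z x. Proof. exact: (linN (brr z)). Qed.
Lemma brBr x y z : br z (x - y) = br z x - br z y. Proof. exact: (linB (brr z)). Qed.
Lemma br0r z : br z 0 = 0. Proof. exact: (lin0 (brr z)). Qed.
Lemma phiD x y : phi (x + y) = phi x + phi y. Proof. exact: (linD phil). Qed.
Lemma phiZ c x : phi (c *: x) = c *: phi x. Proof. exact: (linZ phil). Qed.
Lemma phiN x : phi (- x) = - phi x. Proof. exact: (linN phil). Qed.
Lemma phiB x y : phi (x - y) = phi x - phi y. Proof. exact: (linB phil). Qed.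
Lemma phi0 : phi 0 = 0. Proof. exact: (lin0 phil). Qed.

Hypothesis WI : weakly_inv br phi.
Lemma br_phi2l x y : br (phi (phi x)) y = br x y. Proof. exact: WI. Qed.
Lemma br_phi2r x y : br x (phi (phi y)) = br x y.
Proof. by rewrite br_skew WI -br_skew. Qed.
Lemma phi2_br x y : phi (phi (br x y)) = br x y.
Proof. by rewrite !phi_br br_phi2l br_phi2r. Qed.
End LieFacts.

Section RepFacts.
Variables (K : fieldType) (n m : nat).
Variables (br : 'rV[K]_n -> 'rV[K]_n -> 'rV[K]_n) (phi : 'rV[K]_n -> 'rV[K]_n).
Variables (gam : 'rV[K]_m -> 'rV[K]_m) (sig : 'rV[K]_n -> 'rV[K]_m -> 'rV[K]_m).
Hypothesis HR : HomLieRep br phi gam sig.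

Lemma gaml : lin_map gam. Proof. by case: HR. Qed.
Lemma sigr x : lin_map (sig x). Proof. by case: HR. Qed.
Lemma sigl v : lin_map (fun x => sig x v).
Proof. by case: HR => _ _ H _ _ c x y; apply: H. Qed.
Lemma sig_phi_gam x v : sig (phi x) (gam v) = gam (sig x v). Proof. by case: HR. Qed.
Lemma sig_br x y v : sig (br x y) (gam v) = sig (phi x) (sig y v) - sig (phi y) (sig x v).
Proof. by case: HR. Qed.

Lemma sigDl x y v : sig (x + y) v = sig x v + sig y v. Proof. exact: (linD (sigl v)). Qed.
Lemma sigZl c x v : sig (c *: x) v = c *: sig x v. Proof. exact: (linZ (sigl v)). Qed.
Lemma sigNl x v : sig (- x) v = - sig x v. Proof. exact: (linN (sigl v)). Qed.
Lemma sigBl x y v : sig (x - y) v = sig x v - sig y v. Proof. exact: (linB (sigl v)). Qed.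
Lemma sig0l v : sig 0 v = 0. Proof. exact: (lin0 (sigl v)). Qed.
Lemma sigDr x y v : sig v (x + y) = sig v x + sig v y. Proof. exact: (linD (sigr v)). Qed.
Lemma sigZr c x v : sig v (c *: x) = c *: sig v x. Proof. exact: (linZ (sigr v)). Qed.
Lemma sigNr x v : sig v (- x) = - sig v x. Proof. exact: (linN (sigr v)). Qed.
Lemma sigBr x y v : sig v (x - y) = sig v x - sig v y. Proof. exact: (linB (sigr v)). Qed.
Lemma sig0r v : sig v 0 = 0. Proof. exact: (lin0 (sigr v)). Qed.
Lemma gamD x y : gam (x + y) = gam x + gam y. Proof. exact: (linD gaml). Qed.
Lemma gamZ c x : gam (c *: x) = c *: gam x. Proof. exact: (linZ gaml). Qed.
Lemma gamN x : gam (- x) = - gam x. Proof. exact: (linN gaml). Qed.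
Lemma gamB x y : gam (x - y) = gam x - gam y. Proof. exact: (linB gaml). Qed.
Lemma gam0 : gam 0 = 0. Proof. exact: (lin0 gaml). Qed.
End RepFacts.



Section SDgen.
Variables (K : fieldType) (n m : nat).
Variables (br : 'rV[K]_n -> 'rV[K]_n -> 'rV[K]_n) (phi : 'rV[K]_n -> 'rV[K]_n).
Variables (gam : 'rV[K]_m -> 'rV[K]_m) (sig : 'rV[K]_n -> 'rV[K]_m -> 'rV[K]_m).
Hypothesis HL : HomLie br phi.
Hypothesis HR : HomLieRep br phi gam sig.

Definition sdb (u w : 'rV[K]_(n + m)) : 'rV[K]_(n + m) :=
  row_mx (br (lsubmx u) (lsubmx w)) (sig (lsubmx u) (rsubmx w) - sig (lsubmx w) (rsubmx u)).
Definition sdp (u : 'rV[K]_(n + m)) : 'rV[K]_(n + m) :=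
  row_mx (phi (lsubmx u)) (gam (rsubmx u)).
Definition sdb' (u w : 'rV[K]_(m + n)) : 'rV[K]_(m + n) :=
  row_mx (sig (rsubmx u) (lsubmx w) - sig (rsubmx w) (lsubmx u)) (br (rsubmx u) (rsubmx w)).
Definition sdp' (u : 'rV[K]_(m + n)) : 'rV[K]_(m + n) :=
  row_mx (gam (lsubmx u)) (phi (rsubmx u)).

Lemma sd_HomLie : HomLie sdb sdp.
Proof.
split.
- split => z c u w; rewrite /sdb !linearD !linearZ /= scale_row_mx add_row_mx.
    congr row_mx; first by rewrite (brDl HL) (brZl HL).
    rewrite (sigDl HR) (sigZl HR) (sigDr HR) (sigZr HR); vec.
  congr row_mx; first by rewrite (brDr HL) (brZr HL).
  rewrite (sigDl HR) (sigZl HR) (sigDr HR) (sigZr HR); vec.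
- move=> c u w; rewrite /sdp !linearD !linearZ /= scale_row_mx add_row_mx.
  by rewrite (phiD HL) (phiZ HL) (gamD HR) (gamZ HR).
- move=> u w; rewrite /sdb opp_row_mx; congr row_mx; first exact: (br_skew HL).
  by rewrite opprB.
- move=> u w; rewrite /sdb /sdp !row_mxKl !row_mxKr; congr row_mx; first exact: (phi_br HL).
  by rewrite (gamB HR) !(sig_phi_gam HR).
- move=> u1 u2 u3; rewrite /sdb /sdp !row_mxKl !row_mxKr !add_row_mx -row_mx0.
  congr row_mx; first exact: (br_jac HL).
  rewrite !(sig_br HR) !(sigBr HR); vec.
Qed.

Lemma sd'_HomLie : HomLie sdb' sdp'.
Proof.
split.
- split => z c u w; rewrite /sdb' !linearD !linearZ /= scale_row_mx add_row_mx.
    congr row_mx; last by rewrite (brDl HL) (brZl HL).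
    rewrite (sigDl HR) (sigZl HR) (sigDr HR) (sigZr HR); vec.
  congr row_mx; last by rewrite (brDr HL) (brZr HL).
  rewrite (sigDl HR) (sigZl HR) (sigDr HR) (sigZr HR); vec.
- move=> c u w; rewrite /sdp' !linearD !linearZ /= scale_row_mx add_row_mx.
  by rewrite (phiD HL) (phiZ HL) (gamD HR) (gamZ HR).
- move=> u w; rewrite /sdb' opp_row_mx; congr row_mx; last exact: (br_skew HL).
  by rewrite opprB.
- move=> u w; rewrite /sdb' /sdp' !row_mxKl !row_mxKr; congr row_mx; last exact: (phi_br HL).
  by rewrite (gamB HR) !(sig_phi_gam HR).
- move=> u1 u2 u3; rewrite /sdb' /sdp' !row_mxKl !row_mxKr !add_row_mx -row_mx0.
  congr row_mx; last exact: (br_jac HL).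
  rewrite !(sig_br HR) !(sigBr HR); vec.
Qed.

Hypothesis WI : weakly_inv br phi.
Hypothesis WR : weakly_inv_rep phi sig.
Hypothesis Wg : forall y v, sig y (gam (gam v)) = sig y v.

Lemma sd_weak : weakly_inv sdb sdp.
Proof.
move=> u w; rewrite /sdb /sdp !row_mxKl !row_mxKr.
by rewrite WI WR Wg.
Qed.

Lemma sd'_weak : weakly_inv sdb' sdp'.
Proof.
move=> u w; rewrite /sdb' /sdp' !row_mxKl !row_mxKr.
by rewrite WI WR Wg.
Qed.
End SDgen.


Section Dual.
Variable K : fieldType.
Implicit Types (p q : nat).

Lemma dual_ext p q (f g : 'rV[K]_p -> 'rV[K]_q) a :
  (forall v, f v = g v) -> dual_map f a = dual_map g a.
Proof. by move=> H; apply/rowP => k; rewrite !mxE H. Qed.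

Lemma dual_comp p q r (f : 'rV[K]_p -> 'rV[K]_q) (g : 'rV[K]_q -> 'rV[K]_r) (hg : lin_map g) a :
  dual_map f (dual_map g a) = dual_map (fun v => g (f v)) a.
Proof. by apply/rowP => k; rewrite !mxE (dual_pair hg). Qed.

Lemma dual_id p (a : 'rV[K]_p) : dual_map id a = a.
Proof. by apply/rowP => k; rewrite !mxE pairing_bvec. Qed.

Lemma dual_dual p q (f : 'rV[K]_p -> 'rV[K]_q) (hf : lin_map f) u :
  dual_map (dual_map f) u = f u.
Proof. by apply/rowP => k; rewrite !mxE pairingC (dual_pair hf) pairingC pairing_bvec. Qed.

Lemma dualB p q (f g : 'rV[K]_p -> 'rV[K]_q) a :
  dual_map (fun v => f v - g v) a = dual_map f a - dual_map g a.
Proof. by apply/rowP => k; rewrite !mxE pairingBr. Qed.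
Lemma dualD p q (f g : 'rV[K]_p -> 'rV[K]_q) a :
  dual_map (fun v => f v + g v) a = dual_map f a + dual_map g a.
Proof. by apply/rowP => k; rewrite !mxE pairingDr. Qed.
Lemma dualN p q (f : 'rV[K]_p -> 'rV[K]_q) a :
  dual_map (fun v => - f v) a = - dual_map f a.
Proof. by apply/rowP => k; rewrite !mxE pairingNr. Qed.
Lemma dual0 p q (a : 'rV[K]_q) : dual_map (fun _ : 'rV[K]_p => 0) a = 0.
Proof. by apply/rowP => k; rewrite !mxE pairing0r. Qed.

Lemma dual_row_mx p q r (f : 'rV[K]_r -> 'rV[K]_p) (g : 'rV[K]_r -> 'rV[K]_q) a :
  dual_map (fun y => row_mx (f y) (g y)) a = dual_map f (lsubmx a) + dual_map g (rsubmx a).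
Proof. by apply/rowP => k; rewrite !mxE pairing_split row_mxKl row_mxKr. Qed.

Lemma evalTDl p (t : 'M[K]_(p,p)) a a' b : evalT t (a + a') b = evalT t a b + evalT t a' b.
Proof.
rewrite /evalT -big_split; apply: eq_bigr => i _; rewrite -big_split.
by apply: eq_bigr => j _; rewrite mxE mulrDr mulrDl.
Qed.
Lemma evalTNl p (t : 'M[K]_(p,p)) a b : evalT t (- a) b = - evalT t a b.
Proof.
rewrite /evalT -sumrN; apply: eq_bigr => i _; rewrite -sumrN.
by apply: eq_bigr => j _; rewrite mxE mulrN mulNr.
Qed.
Lemma evalTBl p (t : 'M[K]_(p,p)) a a' b : evalT t (a - a') b = evalT t a b - evalT t a' b.
Proof. by rewrite evalTDl evalTNl. Qed.
Lemma evalTDr p (t : 'M[K]_(p,p)) a b b' : evalT t a (b + b') = evalT t a b + evalT t a b'.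
Proof.
rewrite /evalT -big_split; apply: eq_bigr => i _; rewrite -big_split.
by apply: eq_bigr => j _; rewrite mxE mulrDr.
Qed.
Lemma evalTNr p (t : 'M[K]_(p,p)) a b : evalT t a (- b) = - evalT t a b.
Proof.
rewrite /evalT -sumrN; apply: eq_bigr => i _; rewrite -sumrN.
by apply: eq_bigr => j _; rewrite mxE mulrN.
Qed.
Lemma evalTBr p (t : 'M[K]_(p,p)) a b b' : evalT t a (b - b') = evalT t a b - evalT t a b'.
Proof. by rewrite evalTDr evalTNr. Qed.

Lemma evalT_adT p (B : 'rV[K]_p -> 'rV[K]_p -> 'rV[K]_p) P z t a b :
  evalT (adT B P z t) a b =
  evalT t (dual_map (B z) a) (dual_map P b) + evalT t (dual_map P a) (dual_map (B z) b).
Proof. by rewrite /adT evalTD !evalT_tmap. Qed.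
End Dual.

Section Cocycle.
Variables (K : fieldType) (p : nat).
Variables (B : 'rV[K]_p -> 'rV[K]_p -> 'rV[K]_p) (P : 'rV[K]_p -> 'rV[K]_p).
Variable r : 'M[K]_(p,p).
Hypothesis HL : HomLie B P.
Hypothesis WI : weakly_inv B P.
Hypothesis Hr : tmap P id r = tmap id P r.

Local Notation A z := (dual_map (B z)).
Local Notation F := (dual_map P).
Local Notation E := (evalT r).

Lemma Fr a b : E (F a) b = E a (F b).
Proof.
have := congr1 (fun t => evalT t a b) Hr => /=.
by rewrite !evalT_tmap !dual_id.
Qed.

Lemma f1 y a : A y (F a) = F (A (P y) a).
Proof.
rewrite !dual_comp; try solve [exact: (phil HL) | exact: (brr HL)].
by apply: dual_ext => v; rewrite (phi_br HL).
Qed.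

Lemma f2 x y a : A y (A (P x) a) - A x (A (P y) a) = F (A (B x y) a).
Proof.
rewrite !dual_comp; try solve [exact: (phil HL) | exact: (brr HL)].
rewrite -dualB; apply: dual_ext => v.
have J := br_jac HL x y v.
rewrite [B v x](br_skew HL) (brNr HL) [B (P v) _](br_skew HL) in J.
rewrite -[RHS]add0r -{1}J; apply/rowP => k; rewrite !mxE; ring.
Qed.

Lemma f3 z a : F (F (A z a)) = A z a.
Proof.
rewrite !dual_comp; try solve [exact: (phil HL) | exact: (brr HL)].
by apply: dual_ext => v; rewrite (br_phi2r HL WI).
Qed.

Lemma cocycle_gen x y :
  adT B P (B x y) r = adT B P (P x) (adT B P y r) - adT B P (P y) (adT B P x r).
Proof.
apply: mx_ext => a b.
rewrite evalTB !evalT_adT !f1.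
have h1 : E (A y (A (P x) a)) (F (F b)) - E (A x (A (P y) a)) (F (F b)) = E (A (B x y) a) (F b).
  by rewrite -evalTBl f2 Fr -Fr -Fr f3.
have h2 : E (F (F a)) (A y (A (P x) b)) - E (F (F a)) (A x (A (P y) b)) = E (F a) (A (B x y) b).
  by rewrite -evalTBr f2 -Fr -{2}(f3 (B x y) b) Fr Fr.
rewrite -h1 -h2; ring.
Qed.
End Cocycle.



Lemma HomLie_ext (K : fieldType) p (b1 b2 : 'rV[K]_p -> 'rV[K]_p -> 'rV[K]_p)
  (p1 p2 : 'rV[K]_p -> 'rV[K]_p) :
  (forall a b, b1 a b = b2 a b) -> (forall a, p1 a = p2 a) -> HomLie b2 p2 -> HomLie b1 p1.
Proof.
move=> Eb Ep [[l r] lp sk mu ja]; split; [split|..].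
- by move=> z c x y; rewrite !Eb; exact: l.
- by move=> z c x y; rewrite !Eb; exact: r.
- by move=> c x y; rewrite !Ep; exact: lp.
- by move=> x y; rewrite !Eb; exact: sk.
- by move=> x y; rewrite !Eb !Ep; exact: mu.
- by move=> x y z; rewrite !Eb !Ep; exact: ja.
Qed.

Lemma weakly_inv_ext (K : fieldType) p (b1 b2 : 'rV[K]_p -> 'rV[K]_p -> 'rV[K]_p)
  (p1 p2 : 'rV[K]_p -> 'rV[K]_p) :
  (forall a b, b1 a b = b2 a b) -> (forall a, p1 a = p2 a) -> weakly_inv b2 p2 -> weakly_inv b1 p1.
Proof. by move=> Eb Ep W x y; rewrite !Eb !Ep W. Qed.

Section Main.
Variables (K : fieldType) (n m : nat).
Variables (br : 'rV[K]_n -> 'rV[K]_n -> 'rV[K]_n) (phi : 'rV[K]_n -> 'rV[K]_n).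
Variables (beta : 'rV[K]_m -> 'rV[K]_m) (rho : 'rV[K]_n -> 'rV[K]_m -> 'rV[K]_m).
Variable T : 'rV[K]_m -> 'rV[K]_n.
Hypothesis HL : HomLie br phi.
Hypothesis WI : weakly_inv br phi.
Hypothesis HR : HomLieRep br phi beta rho.
Hypothesis WR : weakly_inv_rep phi rho.
Hypothesis Hb2 : forall x v, rho (phi x) (beta (beta v)) = rho (phi x) v.
Hypothesis HO : O_operator br phi beta rho T.

Lemma Tl : lin_map T. Proof. by case: HO. Qed.
Lemma T_beta v : T (beta v) = phi (T v). Proof. by case: HO. Qed.
Lemma T_O u v : br (T u) (T v) = T (rho (T u) v - rho (T v) u). Proof. by case: HO. Qed.
Lemma TD x y : T (x + y) = T x + T y. Proof. exact: (linD Tl). Qed.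
Lemma TZ c x : T (c *: x) = c *: T x. Proof. exact: (linZ Tl). Qed.
Lemma TN x : T (- x) = - T x. Proof. exact: (linN Tl). Qed.
Lemma TB x y : T (x - y) = T x - T y. Proof. exact: (linB Tl). Qed.
Lemma T0 : T 0 = 0. Proof. exact: (lin0 Tl). Qed.

Lemma rho_phi2 x v : rho (phi (phi x)) v = rho x v. Proof. exact: WR. Qed.
Lemma beta_rho x v : beta (rho x v) = rho (phi x) (beta v).
Proof. by rewrite (sig_phi_gam HR). Qed.
Lemma beta2_rho x v : beta (beta (rho x v)) = rho x v.
Proof. by rewrite !beta_rho Hb2 rho_phi2. Qed.
Lemma rho_bb y v : rho y (beta (beta v)) = rho y v.
Proof. by rewrite -(rho_phi2 y) Hb2. Qed.
Lemma phiT v : phi (T v) = T (beta v). Proof. by rewrite T_beta. Qed.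
Lemma phi2T x w : phi (phi (T (rho x w))) = T (rho x w).
Proof. by rewrite !phiT beta2_rho. Qed.
Lemma phi3T x w : phi (phi (phi (T (rho x w)))) = phi (T (rho x w)).
Proof. by rewrite phi2T. Qed.

Local Notation rhoc := (rho_circ phi rho).
Lemma rhocE x xi : rhoc x xi = - dual_map (rho (phi x)) xi.
Proof. by apply/rowP => k; rewrite !mxE. Qed.
Lemma pairing_rhoc x xi v : pairing (rhoc x xi) v = - pairing xi (rho (phi x) v).
Proof. by rewrite rhocE pairingNl (dual_pair (sigr HR _)). Qed.
Lemma pairing_db xi v : pairing (dual_map beta xi) v = pairing xi (beta v).
Proof. exact: (dual_pair (gaml HR)). Qed.

Lemma HRc : HomLieRep br phi (dual_map beta) rhoc.
Proof.
split.
- exact: lin_dual.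
- by move=> x c a b; rewrite !rhocE (lin_dual _ c a b) opprD scalerN.
- move=> c x y v; apply: row_ext_all => w.
  rewrite pairingDl pairingZl !pairing_rhoc (phiD HL) (phiZ HL) (sigDl HR) (sigZl HR).
  rewrite pairingDr pairingZr; ring.
- move=> x v; apply: row_ext_all => w.
  by rewrite pairing_rhoc pairing_db pairing_db pairing_rhoc rho_phi2 beta_rho.
- move=> x y v; apply: row_ext_all => w.
  rewrite pairingBl !pairing_rhoc pairing_db beta_rho !rho_phi2 (sig_br HR).
  rewrite pairingBr; ring.
Qed.

Lemma WRc : weakly_inv_rep phi rhoc.
Proof. by move=> x v; rewrite !rhocE; congr (- _); apply: dual_ext => w; rewrite rho_phi2. Qed.
Lemma Wgc y v : rhoc y (dual_map beta (dual_map beta v)) = rhoc y v.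
Proof.
apply: row_ext_all => w; rewrite !pairing_rhoc !pairing_db.
by rewrite beta2_rho.
Qed.

Local Notation sdbr := (sd_br br phi rho).
Local Notation sdphi := (sd_phi phi beta).

Lemma HLd : HomLie sdbr sdphi.
Proof. exact: (sd_HomLie HL HRc). Qed.
Lemma WId : weakly_inv sdbr sdphi.
Proof. exact: (sd_weak WI WRc Wgc). Qed.


Lemma F_l a : lsubmx (dual_map sdphi a) = dual_map phi (lsubmx a).
Proof.
rewrite lsub_dual (dual_ext (g := fun y => row_mx (phi y) (0 : 'rV[K]_m))); last first.
  by move=> y; rewrite /sd_phi row_mxKl row_mxKr (lin0 (lin_dual _)).
by rewrite dual_row_mx dual0 addr0.
Qed.
Lemma F_r a : rsubmx (dual_map sdphi a) = beta (rsubmx a).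
Proof.
rewrite rsub_dual (dual_ext (g := fun y => row_mx (0 : 'rV[K]_n) (dual_map beta y))); last first.
  by move=> y; rewrite /sd_phi row_mxKl row_mxKr (phi0 HL).
by rewrite dual_row_mx dual0 add0r (dual_dual (gaml HR)).
Qed.
Lemma A_l x a : lsubmx (dual_map (sdbr x) a) =
  dual_map (br (lsubmx x)) (lsubmx a) + dual_map (fun y => - rhoc y (rsubmx x)) (rsubmx a).
Proof.
rewrite lsub_dual (dual_ext (g := fun y => row_mx (br (lsubmx x) y) (- rhoc y (rsubmx x)))).
  by rewrite dual_row_mx.
by move=> y; rewrite /sd_br row_mxKl row_mxKr (sig0r HRc) sub0r.
Qed.
Lemma A_r x a : rsubmx (dual_map (sdbr x) a) = - rho (phi (lsubmx x)) (rsubmx a).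
Proof.
rewrite rsub_dual (dual_ext (g := fun y => row_mx (0 : 'rV[K]_n) (- dual_map (rho (phi (lsubmx x))) y))).
  by rewrite dual_row_mx dual0 add0r dualN (dual_dual (sigr HR _)).
by move=> y; rewrite /sd_br row_mxKl row_mxKr (br0r HL) (sig0l HRc) subr0 rhocE.
Qed.

Variable r : 'M[K]_(n + m, n + m).
Hypothesis r_def : r = Tbar T - flip (Tbar T).

Lemma evalr p q : evalT r p q =
  pairing (lsubmx q) (T (rsubmx p)) - pairing (lsubmx p) (T (rsubmx q)).
Proof. by rewrite r_def evalTB evalT_flip !(evalT_Tbar Tl). Qed.

Lemma negrhoc_lin xr : lin_map (fun y => - rhoc y xr).
Proof. by move=> c a b; rewrite (sigDl HRc) (sigZl HRc) opprD scalerN. Qed.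

Definition L u x := br x (phi (T u)) - phi (T (rho (phi x) u)).
Definition bT u w := rho (T u) w - rho (T w) u.
Definition Lsig u xi := dual_map (L u) xi.

Lemma L_lin u : lin_map (L u).
Proof.
move=> c x y; rewrite /L (brDl HL) (brZl HL) (phiD HL) (phiZ HL) (sigDl HR) (sigZl HR).
rewrite TD TZ (phiD HL) (phiZ HL); vec.
Qed.

Lemma pairing_rhoc_r v x xi : pairing v (rhoc x xi) = - pairing xi (rho (phi x) v).
Proof. by rewrite pairingC pairing_rhoc. Qed.

Lemma evalD x a b : evalT (adT sdbr sdphi x r) a b = pairing (sdb' bT Lsig a b) x.
Proof.
rewrite evalT_adT !evalr !F_l !F_r !A_l !A_r.
rewrite /sdb' pairing_split row_mxKl row_mxKr.
rewrite !pairingDl ?pairingBl /Lsig !(dual_pair (phil HL)) !(dual_pair (brr HL _)).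
rewrite !pairingNl !(dual_pair (negrhoc_lin _)) !(dual_pair (L_lin _)).
rewrite /L !pairingNr !pairing_rhoc_r !T_beta !rho_phi2 !TN !(phiN HL) !pairingBr !pairingNr.
rewrite ![pairing (rho _ _) _]pairingC.
ring.
Qed.

Local Notation D := (fun u => adT sdbr sdphi u r).

Lemma D_lin : lin_map D.
Proof.
move=> c x y /=; apply: mx_ext => a b.
by rewrite evalD evalTD evalTZ !evalD pairingDr pairingZr.
Qed.

Lemma dual_br_eq a b : dual_br D a b = sdb' bT Lsig a b.
Proof.
apply: row_ext => k; have := evalD (bvec K k) a b; rewrite !pairing_bvec => <-.
by rewrite mxE.
Qed.

Lemma dual_phi_eq a : dual_map sdphi a = sdp' beta (dual_map phi) a.
Proof. by rewrite -[LHS]hsubmxK F_l F_r. Qed.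

Lemma Hr : tmap sdphi id r = tmap id sdphi r.
Proof.
apply: mx_ext => a b; rewrite !evalT_tmap !dual_id !evalr !F_l !F_r.
by rewrite !(dual_pair (phil HL)) !T_beta.
Qed.

Lemma HLV : HomLie bT beta.
Proof.
split.
- split => z c u w; rewrite /bT TD TZ (sigDl HR) (sigZl HR) (sigDr HR) (sigZr HR); vec.
- exact: (gaml HR).
- by move=> u w; rewrite /bT opprB.
- by move=> u w; rewrite /bT (gamB HR) !beta_rho !T_beta.
- move=> u w z; rewrite /bT -!T_O !(sig_br HR) !T_beta !(sigBr HR); vec.
Qed.

Lemma WIV : weakly_inv bT beta.
Proof. by move=> u w; rewrite /bT !T_beta rho_phi2 rho_bb. Qed.

Lemma L_linu c u u' x : L (c *: u + u') x = c *: L u x + L u' x.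
Proof.
rewrite /L TD TZ (phiD HL) (phiZ HL) (brDr HL) (brZr HL) (sigDr HR) (sigZr HR).
rewrite TD TZ (phiD HL) (phiZ HL); vec.
Qed.

Lemma key1 u x : phi (L (beta u) x) = L u (phi x).
Proof.
rewrite /L (phiB HL) (phi_br HL) T_beta (br_phi2r HL WI) -beta_rho T_beta phi3T.
by rewrite rho_phi2.
Qed.

Lemma Lb w x : L (beta w) x = br x (T w) - phi (phi (T (rho x w))).
Proof. by rewrite /L T_beta (br_phi2r HL WI) -beta_rho T_beta. Qed.

Lemma LL w z x : L z (L (beta w) x) = br (br x (T w)) (phi (T z))
  + T (rho (phi (T z)) (rho x w)) - T (rho (phi x) (rho (T w) z)) + T (rho (phi (T w)) (rho x z)).
Proof.
rewrite Lb /L (brBl HL) (br_phi2l WI).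
have e2 : br (T (rho x w)) (phi (T z)) = T (rho (T (rho x w)) (beta z)) - T (rho (phi (T z)) (rho x w)).
  by rewrite -T_beta T_O TB.
rewrite e2 (phiB HL) (phi_br HL) phi3T (sigBl HR) TB (phiB HL).
have e3 : phi (T (rho (br (phi x) (phi (T w))) z)) = T (rho (phi x) (rho (T w) z)) - T (rho (phi (T w)) (rho x z)).
  by rewrite phiT beta_rho (phi_br HL) (br_phi2l WI) (br_phi2r HL WI) (sig_br HR) TB.
have e4 : phi (T (rho (phi (T (rho x w))) z)) = T (rho (T (rho x w)) (beta z)).
  by rewrite phiT beta_rho rho_phi2.
rewrite e3 e4; vec.
Qed.

Lemma key2 w z x : phi (L (bT w z) x) = L z (L (beta w) x) - L w (L (beta z) x).
Proof.
rewrite !LL /L /bT -T_O (phiB HL) (phi_br HL) (br_phi2r HL WI) phi2T (sigBr HR) TB.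
have J := br_jac HL x (T w) (T z).
rewrite [br (phi (T z)) _](br_skew HL) [br (phi (T w)) _](br_skew HL) [br (T z) x](br_skew HL) (brNl HL) in J.
rewrite -[LHS]subr0 -{1}J; vec.
Qed.

Lemma HRV : HomLieRep bT beta (dual_map phi) Lsig.
Proof.
split.
- exact: lin_dual.
- move=> u; exact: lin_dual.
- move=> c u u' xi; apply/rowP => k; rewrite /Lsig !mxE L_linu pairingDr pairingZr //.
- move=> u xi; rewrite /Lsig (dual_comp _ (phil HL)) (dual_comp _ (L_lin u)).
  by apply: dual_ext => v; rewrite key1.
- move=> u w xi; rewrite /Lsig (dual_comp _ (phil HL)) !(dual_comp _ (L_lin _)) -dualB.
  by apply: dual_ext => v; rewrite key2.
Qed.

Lemma WRV : weakly_inv_rep beta Lsig.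
Proof.
move=> u xi; rewrite /Lsig; apply: dual_ext => x.
by rewrite /L !T_beta (br_phi2r HL WI) Hb2.
Qed.

Lemma WgV u xi : Lsig u (dual_map phi (dual_map phi xi)) = Lsig u xi.
Proof.
rewrite /Lsig !(dual_comp _ (phil HL)).
apply: dual_ext => x; rewrite /L !(phiB HL) (phi2_br HL WI) phi3T //.
Qed.

Lemma main_sec : coboundary_HLB sdbr sdphi D r.
Proof.
split; last exact: Hr.
- split.
  + split; [exact: HLd | exact: WId].
  + exact: D_lin.
  + apply: (HomLie_ext dual_br_eq dual_phi_eq); exact: (sd'_HomLie HLV HRV).
  + apply: (weakly_inv_ext dual_br_eq dual_phi_eq); exact: (sd'_weak WIV WRV WgV).
  + move=> x y; exact: (cocycle_gen HLd WId Hr).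
- by [].
Qed.

End Main.

Unset Implicit Arguments.
Set Strict Implicit.

Theorem corollary5p10 (K : fieldType) (n m : nat)
    (br : 'rV[K]_n -> 'rV[K]_n -> 'rV[K]_n) (phi : 'rV[K]_n -> 'rV[K]_n)
    (beta : 'rV[K]_m -> 'rV[K]_m) (rho : 'rV[K]_n -> 'rV[K]_m -> 'rV[K]_m)
    (T : 'rV[K]_m -> 'rV[K]_n) :
  HomLie br phi -> weakly_inv br phi ->
  HomLieRep br phi beta rho -> weakly_inv_rep phi rho ->
  (forall x v, rho (phi x) (beta (beta v)) = rho (phi x) v) ->
  O_operator br phi beta rho T ->
  let r := Tbar T - flip (Tbar T) in
  coboundary_HLB (sd_br br phi rho) (sd_phi phi beta)
    (fun u => adT (sd_br br phi rho) (sd_phi phi beta) u r) r.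
Proof.
move=> HL WI HR WR Hb2 HO r.
exact: (main_sec HL WI HR WR Hb2 HO (erefl r)).
Qed.
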